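(* A Q-net $f:\mathbb Z^m\to\mathbb R^N$ is a discrete Koenigs net if and only if there exists a function $\nu:\mathbb Z^m\to\mathbb R\setminus\{0\}$ such that for every elementary quadrilateral $(f,f_i,f_{ij},f_j)$, with $M=(ff_{ij})\cap(f_if_j)$ the intersection point of its diagonals, $$\frac{\nu_{ij}}{\nu}=\frac{l(M,f_{ij})}{l(M,f)},\qquad \frac{\nu_j}{\nu_i}=\frac{l(M,f_j)}{l(M,f_i)}.$$ Such a $\nu$ is unique up to multiplication by one nonzero constant on the black points and another nonzero constant on the white points of $\mathbb Z^m$.
   Context: Let $N\ge 3$, $m\ge 2$. For a map $f:\mathbb Z^m\to\mathbb R^N$, write $e_i$ for the $i$-th unit vector of $\mathbb Z^m$, $f=f(u)$, $f_i=f(u+e_i)$, $f_{ij}=f(u+e_i+e_j)$; similarly $\nu_i=\nu(u+e_i)$, $\nu_{ij}=\nu(u+e_i+e_j)$; $\delta_i f=f_i-f$. A Q-net is a map $f:\mathbb Z^m\to\mathbb R^N$ such that for every $u$ and $i\ne j$ the elementary quadrilateral $(f,f_i,f_{ij},f_j)$ is planar; elementary quadrilaterals are assumed non-degenerate: four distinct vertices, no three collinear, and the diagonals $(ff_{ij})$, $(f_if_j)$ meet in a point $M$ different from all vertices. Two planar quadrilaterals $(A,B,C,D)$, $(A^*,B^*,C^*,D^* )$ are dual if corresponding sides are parallel ($A^*B^*\parallel AB$, $B^*C^*\parallel BC$, $C^*D^*\parallel CD$, $D^*A^*\parallel DA$) and non-corresponding diagonals are parallel ($A^*C^*\parallel BD$,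 $B^*D^*\parallel AC$). A Q-net $f$ is a discrete Koenigs net if there is a Q-net $f^*$ (a dual net) such that each $(f^*,f^*_i,f^*_{ij},f^*_j)$ is dual to $(f,f_i,f_{ij},f_j)$, i.e. $\delta_if^*\parallel\delta_if$, $\delta_jf^*\parallel\delta_jf$, $f^*_{ij}-f^*\parallel f_i-f_j$, $f^*_i-f^*_j\parallel f_{ij}-f$. For collinear points $P,Q$, $l(P,Q)$ denotes the directed (signed) length along their line (ratios of such lengths on one line are orientation-independent). A point $u\in\mathbb Z^m$ is black if $u_1+\dots+u_m$ is even, white otherwise. *)

(* Defs.v *)
From HB Require Import structures.
From mathcomp Require Import all_boot all_order all_algebra.
Set Implicit Arguments. Unset Strict Implicit. Unset Printing Implicit Defensive.
Import Order.TTheory GRing.Theory Num.Theory.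
Local Open Scope ring_scope.

Section Defs.
Variable R : realFieldType.
Variable N : nat.
Notation pt := 'rV[R]_N.

Definition shift (m : nat) (u : 'rV[int]_m) (i : 'I_m) : 'rV[int]_m :=
  u + delta_mx ord0 i.

Definition black (m : nat) (u : 'rV[int]_m) : bool :=
  (2%:Z %| \sum_(k < m) u ord0 k)%Z.

Definition parallel (a b : pt) : Prop :=
  a != 0 /\ b != 0 /\ exists k : R, a = k *: b.

Definition collinear3 (A B C : pt) : Prop :=
  (\rank (col_mx (B - A) (C - A)) <= 1)%N.

Definition planar4 (A B C D : pt) : Prop :=
  (\rank (col_mx (B - A) (col_mx (C - A) (D - A))) <= 2)%N.

Definition on_line (X P Q : pt) : Prop :=
  exists t : R, X = P + t *: (Q - P).

Definition nondeg_quad (A B C D : pt) : Prop :=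
  [/\ [/\ A != B, A != C, A != D & [/\ B != C, B != D & C != D]],
      [/\ ~ collinear3 A B C, ~ collinear3 A B D, ~ collinear3 A C D
        & ~ collinear3 B C D] &
      exists M : pt, [/\ on_line M A C, on_line M B D &
                         [/\ M != A, M != B, M != C & M != D]]].

Definition Qnet (m : nat) (f : 'rV[int]_m -> pt) : Prop :=
  forall (u : 'rV[int]_m) (i j : 'I_m), i != j ->
    planar4 (f u) (f (shift u i)) (f (shift (shift u i) j)) (f (shift u j)) /\
    nondeg_quad (f u) (f (shift u i)) (f (shift (shift u i) j)) (f (shift u j)).

Definition dual_quad (A B C D A' B' C' D' : pt) : Prop :=
  [/\ parallel (B' - A') (B - A), parallel (C' - B') (C - B),
      parallel (D' - C') (D - C), parallel (A' - D') (A - D) &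
      parallel (C' - A') (D - B) /\ parallel (D' - B') (C - A)].

Definition Koenigs (m : nat) (f : 'rV[int]_m -> pt) : Prop :=
  exists fs : 'rV[int]_m -> pt, Qnet fs /\
    forall (u : 'rV[int]_m) (i j : 'I_m), i != j ->
      dual_quad (f u) (f (shift u i)) (f (shift (shift u i) j)) (f (shift u j))
                (fs u) (fs (shift u i)) (fs (shift (shift u i) j)) (fs (shift u j)).

(* For collinear points M, P, Q with Q <> M, the ratio of directed lengths
   l(M,P)/l(M,Q) equals r iff P - M = r (Q - M). *)
Definition lratio_is (M P Q : pt) (r : R) : Prop :=
  P - M = r *: (Q - M).

Definition nu_cond (m : nat) (f : 'rV[int]_m -> pt) (nu : 'rV[int]_m -> R) : Prop :=
  (forall u, nu u != 0) /\
  forall (u : 'rV[int]_m) (i j : 'I_m), i != j ->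
    forall M : pt,
      on_line M (f u) (f (shift (shift u i) j)) ->
      on_line M (f (shift u i)) (f (shift u j)) ->
      lratio_is M (f (shift (shift u i) j)) (f u)
                (nu (shift (shift u i) j) / nu u) /\
      lratio_is M (f (shift u j)) (f (shift u i))
                (nu (shift u j) / nu (shift u i)).

End Defs.

(* Main.v *)
Require Import Defs.
From HB Require Import structures.
From mathcomp Require Import all_boot all_order all_algebra.
From Stdlib Require Import Ring Field ClassicalEpsilon.
Set Implicit Arguments. Unset Strict Implicit. Unset Printing Implicit Defensive.
Import Order.TTheory GRing.Theory Num.Theory.
Local Open Scope ring_scope.


Section Zm.
Variable m : nat.
Definition ev (i : 'I_m) : 'rV[int]_m := delta_mx 0 i.
Lemma evE (i l : 'I_m) : ev i 0 l = (i == l)%:R.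
Proof. by rewrite /ev mxE eqxx eq_sym. Qed.
Lemma shiftE (u : 'rV[int]_m) i : shift u i = u + ev i.
Proof. by []. Qed.
Definition low k (u : 'rV[int]_m) := forall l : 'I_m, (k <= l)%N -> u 0 l = 0.

Lemma low_ind (P : 'rV[int]_m -> Prop) k0 :
  (forall u, low k0 u -> P u) ->
  (forall (k : 'I_m) u, (k0 <= k)%N -> low k.+1 u -> (P u <-> P (u + ev k))) ->
  forall u, P u.
Proof.
move=> Hb Hs.
suff H : forall k, (k0 <= k)%N -> (k <= m)%N -> forall u, low k u -> P u.
  move=> u; case: (leqP k0 m) => h.
    by apply: (H m h (leqnn m)) => l; rewrite leqNgt ltn_ord.
  apply: Hb => l hl; by have := leq_trans (ltn_ord l) (ltnW h); rewrite ltnNge hl.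
elim=> [|k IH] h0 hm u hu.
  by apply: Hb; move: h0; rewrite leqn0 => /eqP ->.
case: (eqVneq k0 k.+1) => [E|hne]; first by apply: Hb; rewrite E.
have h0' : (k0 <= k)%N by rewrite -ltnS ltn_neqAle hne h0.
have hkm : (k < m)%N := hm.
pose kk := Ordinal hkm.
have [u' Eu'] : exists u', u' = u - (u 0 kk) *: ev kk by eexists.
have hu' : low k u'.
  move=> l hl; rewrite Eu' !mxE eqxx /= eq_sym.
  case: (eqVneq kk l) => [<-|ne]; first by rewrite mulr1 subrr.
  rewrite mulr0 subr0; apply: hu; rewrite ltn_neqAle hl andbT.
  by apply/eqP => E; move: ne; rewrite -val_eqE /= E eqxx.
have lown : forall n : int, low k.+1 (u' + n *: ev kk).
  move=> n l hl; rewrite !mxE eqxx /= eq_sym.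
  have ne : kk != l by rewrite -val_eqE /= neq_ltn hl.
  by rewrite (negPf ne) mulr0 addr0 hu' // ltnW.
have Hall : forall n : int, P (u' + n *: ev kk).
  elim/int_rec.
  - by rewrite scale0r addr0; apply: IH => //; exact: ltnW.
  - move=> n Pn; have := Hs kk _ h0' (lown n); have -> : (n.+1 : int) = n%:Z + 1 by rewrite -addn1 PoszD.
    rewrite scalerDl scale1r addrA.
    by move=> [H1 _]; apply: H1.
  - move=> n Pn; have := Hs kk _ h0' (lown (- n.+1%:Z)).
    move=> [_ H2]; apply: H2.
    rewrite -addrA -{2}(scale1r (ev kk)) -scalerDl.
    have -> : - (n.+1 : int) + 1 = - n%:Z by rewrite -addn1 PoszD opprD addrK.
    exact: Pn.
have -> : u = u' + (u 0 kk) *: ev kk by rewrite Eu' subrK.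
exact: Hall.
Qed.

Lemma Zm_ind (P : 'rV[int]_m -> Prop) :
  P 0 -> (forall u i, P u <-> P (shift u i)) -> forall u, P u.
Proof.
move=> H0 Hs; apply: (@low_ind P 0).
  move=> u hu; have -> : u = 0 by apply/rowP => l; rewrite hu // mxE.
  exact: H0.
move=> k u _ _; exact: Hs.
Qed.

Section Integrate.
Variable G : zmodType.
Variable w : 'rV[int]_m -> 'I_m -> G.
Hypothesis Hw : forall u i j, w u i + w (u + ev i) j = w u j + w (u + ev j) i.

Definition psum (v : 'rV[int]_m) (i : 'I_m) (n : int) : G :=
  match n with
  | Posz n => \sum_(t < n) w (v + t%:Z *: ev i) i
  | Negz n => - \sum_(t < n.+1) w (v - t.+1%:Z *: ev i) i
  end.

Lemma psum0 v i : psum v i 0 = 0.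
Proof. exact: big_ord0. Qed.

Lemma psumS v i n : psum v i (n + 1) = psum v i n + w (v + n *: ev i) i.
Proof.
case: n => n.
  have -> : Posz n + 1 = Posz n.+1 by rewrite -addn1 PoszD.
  by rewrite /psum big_ord_recr.
case: n => [|n].
  have -> : Negz 0 + 1 = 0 by [].
  by rewrite psum0 /psum big_ord_recr /= big_ord0 add0r NegzE scaleNr addNr.
have -> : Negz n.+1 + 1 = Negz n.
  by rewrite !NegzE -[(n.+2)%N]addn1 PoszD opprD addrK.
rewrite /psum [in RHS]big_ord_recr /= opprD -addrA NegzE scaleNr.
by rewrite addNr addr0.
Qed.

Definition trunc k (u : 'rV[int]_m) : 'rV[int]_m :=
  \row_l (if (l < k)%N then u 0 l else 0).

Definition Fint (u : 'rV[int]_m) : G := \sum_(k < m) psum (trunc k u) k (u 0 k).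

Lemma Fstep u (i : 'I_m) : low i.+1 u -> Fint (u + ev i) = Fint u + w u i.
Proof.
move=> hu; rewrite /Fint (bigD1 i) //= [X in _ = X + _](bigD1 i) //=.
have Et : trunc i (u + ev i) = trunc i u.
  apply/rowP => l; rewrite !mxE eqxx /=.
  case: ifP => // hl; have : i != l by rewrite neq_ltn hl orbT.
  by rewrite eq_sym => /negPf ->; rewrite addr0.
have Ec : (u + ev i) 0 i = u 0 i + 1 by rewrite !mxE !eqxx.
have Eu : trunc i u + u 0 i *: ev i = u.
  apply/rowP => l; rewrite !mxE eqxx /=.
  case: (ltngtP l i) => hl.
  - have /negPf -> : l != i by rewrite neq_ltn hl.
    by rewrite /= mulr0n mulr0 addr0.
  - have /negPf -> : l != i by rewrite neq_ltn hl orbT.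
    by rewrite /= mulr0n mulr0 add0r hu.
  - have -> : l = i by apply: val_inj.
    by rewrite eqxx mulr1 add0r.
rewrite Et Ec psumS Eu addrAC; congr (_ + _ + _).
apply: eq_bigr => k hk.
case: (ltngtP k i) => hki.
- have -> : trunc k (u + ev i) = trunc k u.
    apply/rowP => l; rewrite !mxE; case: ifP => // hl.
    have /negPf -> : l != i by rewrite neq_ltn (leq_trans hl (ltnW hki)).
    by rewrite andbF addr0.
  by rewrite !mxE (negPf hk) andbF addr0.
- have h0 : u 0 k = 0 by apply: hu.
  by rewrite !mxE (negPf hk) andbF addr0 h0 !psum0.
- by move: hk; rewrite (val_inj hki) eqxx.
Qed.

Lemma integrate_ex : exists F : 'rV[int]_m -> G, forall u i, F (shift u i) = F u + w u i.
Proof.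
exists Fint => u i; move: u.
apply: (@low_ind (fun u => Fint (u + ev i) = Fint u + w u i) i.+1).
  by move=> u; apply: Fstep.
move=> k v hik hv.
have hv' : low k.+1 (v + ev i).
  move=> l hl; rewrite !mxE hv //.
  have /negPf -> : l != i by rewrite neq_ltn (ltn_trans hik hl) orbT.
  by rewrite andbF addr0.
have Fk1 := Fstep hv; have Fk2 := Fstep hv'.
have C : v + ev k + ev i = v + ev i + ev k by rewrite addrAC.
split => P.
  by rewrite C Fk2 P -addrA Hw addrA -Fk1.
apply: (@addIr _ (w (v + ev i) k)).
by rewrite -Fk2 -C P Fk1 -addrA -Hw addrA.
Qed.
End Integrate.

Lemma par2 (x : int) : (2 %| x + 1)%Z = ~~ (2 %| x)%Z.
Proof.
have H : forall y : int, (2 %| y)%Z = ((y %% 2)%Z == 0) by move=> y; apply/dvdz_mod0P/eqP.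
rewrite !H -modzDml.
have h1 : (0 <= x %% 2)%Z by apply: modz_ge0.
have h2 : (x %% 2 < 2)%Z by apply: ltz_pmod.
move: h1 h2; case: (x %% 2)%Z => // n _.
by case: n => [|[|n]].
Qed.

Lemma black_shift (u : 'rV[int]_m) i : black (shift u i) = ~~ black u.
Proof.
rewrite /black -par2; congr (_ %| _)%Z.
rewrite (eq_bigr (fun k => u 0 k + (k == i)%:R)); last first.
  by move=> k _; rewrite !mxE eqxx.
rewrite big_split /=; congr (_ + _).
by rewrite (bigD1 i) //= eqxx big1 ?addr0 // => k /negPf ->.
Qed.

Lemma shiftC (u : 'rV[int]_m) i j : shift (shift u i) j = shift (shift u j) i.
Proof. by rewrite !shiftE addrAC. Qed.
End Zm.


Definition nzR (R : realFieldType) := {x : R | x != 0}.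
HB.instance Definition _ (R : realFieldType) := Choice.on (nzR R).
Section NZ.
Variable R : realFieldType.
Definition nz0 : nzR R := exist _ 1 (oner_neq0 R).
Definition nzadd (x y : nzR R) : nzR R := exist _ (sval x * sval y) (mulf_neq0 (svalP x) (svalP y)).
Definition nzopp (x : nzR R) : nzR R := exist _ (sval x)^-1 (invr_neq0 (svalP x)).
Lemma nzaddA : associative nzadd. Proof. move=> x y z; apply: val_inj; exact: mulrA. Qed.
Lemma nzaddC : commutative nzadd. Proof. move=> x y; apply: val_inj; exact: mulrC. Qed.
Lemma nzadd0 : left_id nz0 nzadd. Proof. move=> x; apply: val_inj; exact: mul1r. Qed.
Lemma nzaddN : left_inverse nz0 nzopp nzadd. Proof. move=> x; apply: val_inj; exact: mulVf (svalP x). Qed.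
End NZ.
HB.instance Definition _ (R : realFieldType) := GRing.isZmodule.Build (nzR R) (@nzaddA R) (@nzaddC R) (@nzadd0 R) (@nzaddN R).
Lemma nzaddE (R : realFieldType) (x y : nzR R) : sval (x + y) = sval x * sval y. Proof. by []. Qed.
Lemma nzoppE (R : realFieldType) (x : nzR R) : sval (- x) = (sval x)^-1. Proof. by []. Qed.

Section Geo.
Variable R : realFieldType.
Variable N : nat.
Notation pt := 'rV[R]_N.

Definition radd (x y : R) : R := x + y.
Definition rmul (x y : R) : R := x * y.
Definition ropp (x : R) : R := - x.
Definition rinv (x : R) : R := x^-1.
Definition rzero : R := 0.
Definition rone : R := 1.
Definition rsub (x y : R) : R := radd x (ropp y).
Definition rdiv (x y : R) : R := rmul x (rinv y).
Lemma raddE (x y : R) : x + y = radd x y. Proof. by []. Qed.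
Lemma rmulE (x y : R) : x * y = rmul x y. Proof. by []. Qed.
Lemma roppE (x : R) : - x = ropp x. Proof. by []. Qed.
Lemma rinvE (x : R) : x^-1 = rinv x. Proof. by []. Qed.
Lemma rzeroE : 0 = rzero :> R. Proof. by []. Qed.
Lemma roneE : 1 = rone :> R. Proof. by []. Qed.
Lemma Rth : @ring_theory R rzero rone radd rmul rsub ropp eq.
Proof. split; rewrite /radd/rmul/rsub/ropp/rzero/rone/radd; [exact: add0r|exact: addrC|exact: addrA|exact: mul1r|exact: mulrC|exact: mulrA|exact: mulrDl|done|exact: subrr]. Qed.
Lemma Fth : @field_theory R rzero rone radd rmul rsub ropp rdiv rinv eq.
Proof. split; [exact Rth| apply/eqP; exact: oner_neq0 | done | move=> p /eqP; exact: mulVf]. Qed.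
Add Field Rfield : Fth.

Ltac genatoms := repeat match goal with |- context [@fun_of_matrix _ _ _ ?M ?i ?j] =>
   let x := fresh "x" in move: (@fun_of_matrix _ _ _ M i j) => x end.
Ltac norm := rewrite ?raddE ?rmulE ?roppE ?rinvE ?rzeroE ?roneE;
   try match goal with |- @eq _ ?x ?y => change (@eq R x y) end.
Ltac sidec := rewrite ?/rzero ?/rmul ?/rinv; repeat split; try (apply/eqP; by rewrite ?mulf_neq0 ?invr_neq0); try (apply/eqP; exact: oner_neq0).
Ltac fld := norm; field; sidec.
Ltac nzt := rewrite subr_eq0; first [assumption | rewrite eq_sym; assumption].
Ltac vec := apply/rowP => ?; rewrite !mxE; genatoms; fld.

Lemma test (a b : R) (v w : pt) : a != 0 -> (a *: v + b *: w) = a *: (v + (b / a) *: w).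
Proof. move=> ha. vec. Qed.

Definition indep (a b : pt) := forall al be : R, al *: a + be *: b = 0 -> al = 0 /\ be = 0.

Lemma rank_mult (x y w : pt) c1 c2 : x = c1 *: w -> y = c2 *: w -> (\rank (col_mx x y) <= 1)%N.
Proof.
move=> -> ->; apply: leq_trans (rank_leq_row w).
by apply: mxrankS; rewrite col_mx_sub !scalemx_sub ?submx_refl.
Qed.

Lemma col_lambda (x y : pt) : (\rank (col_mx x y) <= 1)%N -> x != 0 -> exists l, y = l *: x.
Proof.
move=> hr hx.
have hsub : (x <= col_mx x y)%MS by have := submx_refl (col_mx x y); rewrite col_mx_sub => /andP[].
have rx : \rank x = 1%N.
  apply/eqP; rewrite eqn_leq rank_leq_row lt0n mxrank_eq0; exact: hx.
have [_ E] := mxrank_leqif_sup hsub.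
have : (col_mx x y <= x)%MS by rewrite -E eqn_leq (mxrankS hsub) rx hr.
rewrite col_mx_sub => /andP[_ /submxP[D ->]].
by exists (D 0 0); rewrite {1}(mx11_scalar D) mul_scalar_mx.
Qed.

Lemma noncol (a b x y : pt) al1 be1 al2 be2 : indep a b ->
  x = al1 *: a + be1 *: b -> y = al2 *: a + be2 *: b ->
  al1 * be2 - al2 * be1 != 0 -> ~ (\rank (col_mx x y) <= 1)%N.
Proof.
move=> hi ex ey hd hr.
case: (eqVneq x 0) => hx.
  have [h1 h2] : al1 = 0 /\ be1 = 0 by apply: hi; rewrite -ex.
  by move: hd; rewrite h1 h2 !(mul0r, mulr0) subrr eqxx.
have [l hl] := col_lambda hr hx.
have [h1 h2] : al2 - l * al1 = 0 /\ be2 - l * be1 = 0.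
  apply: hi.
  have -> : (al2 - l * al1) *: a + (be2 - l * be1) *: b =
    (al2 *: a + be2 *: b) - l *: (al1 *: a + be1 *: b) by vec.
  by rewrite -ey -ex -hl subrr.
move/eqP: h1; rewrite subr_eq0 => /eqP h1; move/eqP: h2; rewrite subr_eq0 => /eqP h2.
move: hd; rewrite h1 h2.
have -> : al1 * (l * be1) - l * al1 * be1 = 0 by fld.
by rewrite eqxx.
Qed.

Lemma span2 (a b x y z : pt) al1 be1 al2 be2 al3 be3 :
  x = al1 *: a + be1 *: b -> y = al2 *: a + be2 *: b -> z = al3 *: a + be3 *: b ->
  (\rank (col_mx x (col_mx y z)) <= 2)%N.
Proof.
move=> -> -> ->.
have [ha hb] : (a <= col_mx a b)%MS /\ (b <= col_mx a b)%MS.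
  by have := submx_refl (col_mx a b); rewrite col_mx_sub => /andP[].
have hs : forall c d, ((c *: a + d *: b)%R <= col_mx a b)%MS.
  by move=> c d; apply: addmx_sub; apply: scalemx_sub.
apply: leq_trans (rank_leq_row (col_mx a b)).
by apply: mxrankS; rewrite !col_mx_sub !hs.
Qed.

Lemma indep_nz (a b : pt) al be : indep a b -> (al != 0) || (be != 0) -> al *: a + be *: b != 0.
Proof.
move=> hi h; apply/eqP => E; have [h1 h2] := hi _ _ E.
by move: h; rewrite h1 h2 eqxx.
Qed.


Lemma quad_info (A B C D : pt) : nondeg_quad A B C D ->
  exists M r rh, [/\ on_line M A C, on_line M B D, C = M + r *: (A - M),
     D = M + rh *: (B - M) & [/\ indep (A - M) (B - M), r != 1, rh != 1, A != M & B != M]]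
  /\ (forall M', on_line M' A C -> on_line M' B D -> M' = M).
Proof.
case => [[hAB hAC hAD [hBC hBD hCD]] [nc1 nc2 nc3 nc4] [M [hl1 hl2 [hMA hMB hMC hMD]]]].
have [t Et] := hl1; have [s Es] := hl2.
have ht : t != 0 by apply/eqP => t0; move: hMA; rewrite Et t0 scale0r addr0 eqxx.
have hs : s != 0 by apply/eqP => s0; move: hMB; rewrite Es s0 scale0r addr0 eqxx.
have EC : C = M + ((t - 1) / t) *: (A - M) by rewrite Et; vec.
have ED : D = M + ((s - 1) / s) *: (B - M) by rewrite Es; vec.
move: ((t - 1) / t) ((s - 1) / s) EC ED => r rh EC ED.
have hAM : A != M by rewrite eq_sym.
have hBM : B != M by rewrite eq_sym.
have hi : indep (A - M) (B - M).
  move=> al be H; case: (eqVneq be 0) => hbe.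
    move: H; rewrite hbe scale0r addr0 => /eqP; rewrite scaler_eq0 subr_eq0 (negPf hAM) orbF.
    by move/eqP.
  have EB : B = M + (- (al / be)) *: (A - M).
    apply/eqP; rewrite -subr_eq0; apply/eqP.
    have -> : B - (M + (- (al / be)) *: (A - M)) = be^-1 *: (al *: (A - M) + be *: (B - M)) by vec.
    by rewrite H scaler0.
  exfalso; apply: nc1; rewrite /collinear3.
  apply: (@rank_mult _ _ (A - M) (- (al / be) - 1) (r - 1)).
    by rewrite EB; vec.
  by rewrite EC; vec.
have hr1 : r != 1 by apply/eqP => r1; move: hAC; rewrite EC r1 scale1r addrC subrK eqxx.
have hrh1 : rh != 1 by apply/eqP => r1; move: hBD; rewrite ED r1 scale1r addrC subrK eqxx.
exists M, r, rh; split; first by split.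
move=> M' [t' Et'] [s' Es'].
have H : (1 + t' * (r - 1)) *: (A - M) + (- (1 + s' * (rh - 1))) *: (B - M) = 0.
  have -> : (1 + t' * (r - 1)) *: (A - M) + (- (1 + s' * (rh - 1))) *: (B - M) =
     (A + t' *: (C - A)) - (B + s' *: (D - B)) by rewrite EC ED; vec.
  by rewrite -Et' -Es' subrr.
have [h1 _] := hi _ _ H.
rewrite Et'.
have -> : A + t' *: (C - A) = M + (1 + t' * (r - 1)) *: (A - M) by rewrite EC; vec.
by rewrite h1 scale0r addr0.
Qed.

Lemma neq_of (a b X Y : pt) al be : indep a b -> X - Y = al *: a + be *: b ->
  (al != 0) || (be != 0) -> X != Y.
Proof. by move=> hi E h; rewrite -subr_eq0 E indep_nz. Qed.

Lemma local_dual (A B C D M As Bs Cs Ds : pt) (k1 r rh : R) :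
  indep (A - M) (B - M) -> k1 != 0 -> r != 0 -> r != 1 -> rh != 0 -> rh != 1 ->
  A != B -> B != C -> C != D -> D != A -> A != C -> B != D ->
  C = M + r *: (A - M) -> D = M + rh *: (B - M) ->
  Bs = As + k1 *: (B - A) -> Cs = Bs + (k1 / r) *: (C - B) ->
  Ds = As + (k1 / rh) *: (D - A) -> Cs = Ds + (k1 / (r * rh)) *: (C - D) ->
  [/\ planar4 As Bs Cs Ds, nondeg_quad As Bs Cs Ds & dual_quad A B C D As Bs Cs Ds].
Proof.
move=> hi hk hr0 hr1 hh0 hh1 hAB hBC hCD hDA hAC hBD EC ED EBs ECs EDs ECs'.
have hr1' : r - 1 != 0 by rewrite subr_eq0.
have hh1' : rh - 1 != 0 by rewrite subr_eq0.
have p1 : Bs - As = (- k1) *: (A - M) + k1 *: (B - M) by rewrite EBs; vec.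
have p2 : Cs - As = 0 *: (A - M) + (k1 * (r - 1) / r) *: (B - M) by rewrite ECs EBs EC; vec.
have p3 : Ds - As = (- (k1 / rh)) *: (A - M) + k1 *: (B - M) by rewrite EDs ED; vec.
have p4 : Cs - Bs = k1 *: (A - M) + (- (k1 / r)) *: (B - M) by rewrite ECs EC; vec.
have p5 : Ds - Bs = (k1 * (rh - 1) / rh) *: (A - M) + 0 *: (B - M) by rewrite EDs EBs ED; vec.
have p6 : Ds - Cs = (- (k1 / rh)) *: (A - M) + (k1 / r) *: (B - M) by rewrite ECs' EC ED; vec.
have nz1 : k1 * (r - 1) / r != 0 by rewrite !mulf_neq0 ?invr_neq0 ?mulf_neq0.
have nz2 : k1 * (rh - 1) / rh != 0 by rewrite !mulf_neq0 ?invr_neq0 ?mulf_neq0.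
have nz3 : k1 / r != 0 by rewrite !mulf_neq0 ?invr_neq0 ?mulf_neq0.
have nz4 : k1 / rh != 0 by rewrite !mulf_neq0 ?invr_neq0 ?mulf_neq0.
have d1 : Bs != As by apply: (neq_of hi p1); rewrite hk orbT.
have d2 : Cs != As by apply: (neq_of hi p2); rewrite nz1 orbT.
have d3 : Ds != As by apply: (neq_of hi p3); rewrite hk orbT.
have d4 : Cs != Bs by apply: (neq_of hi p4); rewrite hk.
have d5 : Ds != Bs by apply: (neq_of hi p5); rewrite nz2.
have d6 : Ds != Cs by apply: (neq_of hi p6); rewrite nz3 orbT.
pose Ms := As + k1 *: (B - M).
split.
- exact: (span2 p1 p2 p3).
- split.
  + by split; [rewrite eq_sym | rewrite eq_sym | rewrite eq_sym | split; rewrite eq_sym].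
  + split; rewrite /collinear3.
    * apply: (noncol hi p1 p2).
      have -> : - k1 * (k1 * (r - 1) / r) - 0 * k1 = - (k1 * k1 * (r - 1) / r) by fld.
      by rewrite oppr_eq0 !mulf_neq0 ?invr_neq0.
    * apply: (noncol hi p1 p3).
      have -> : - k1 * k1 - - (k1 / rh) * k1 = - (k1 * k1 * (rh - 1) / rh) by fld.
      by rewrite oppr_eq0 !mulf_neq0 ?invr_neq0.
    * apply: (noncol hi p2 p3).
      have -> : 0 * k1 - - (k1 / rh) * (k1 * (r - 1) / r) = k1 * k1 * (r - 1) / (r * rh) by fld.
      by rewrite !mulf_neq0 ?invr_neq0 ?mulf_neq0.
    * have q1 : Cs - Bs = k1 *: (A - M) + (- (k1 / r)) *: (B - M) := p4.
      apply: (noncol hi p4 p5).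
      have -> : k1 * 0 - k1 * (rh - 1) / rh * - (k1 / r) = k1 * k1 * (rh - 1) / (r * rh) by fld.
      by rewrite !mulf_neq0 ?invr_neq0 ?mulf_neq0.
  + exists Ms; split.
    * by exists (r / (r - 1)); rewrite /Ms ECs EBs EC; vec.
    * by exists (rh / (rh - 1)); rewrite /Ms EDs EBs ED; vec.
    * split.
      - apply: (@neq_of (A - M) (B - M) _ _ 0 k1) => //; last by rewrite hk orbT.
        by rewrite /Ms; vec.
      - apply: (@neq_of (A - M) (B - M) _ _ k1 0) => //; last by rewrite hk.
        by rewrite /Ms EBs; vec.
      - apply: (@neq_of (A - M) (B - M) _ _ 0 (k1 / r)) => //; last by rewrite nz3 orbT.
        by rewrite /Ms ECs EBs EC; vec.
      - apply: (@neq_of (A - M) (B - M) _ _ (k1 / rh) 0) => //; last by rewrite nz4.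
        by rewrite /Ms EDs ED; vec.
- have nzv : forall X Y : pt, X != Y -> Y - X != 0 by move=> X Y h; rewrite subr_eq0 eq_sym.
  have par : forall X Y : pt, forall k, X != 0 -> Y != 0 -> X = k *: Y -> parallel X Y.
    by move=> X Y k h1 h2 h3; split => //; split => //; exists k.
  split.
  + by apply: (par _ _ k1); [nzt | nzt | rewrite EBs; vec].
  + by apply: (par _ _ (k1 / r)); [nzt | nzt | rewrite ECs; vec].
  + by apply: (par _ _ (k1 / (r * rh))); [nzt | nzt | rewrite ECs'; vec].
  + by apply: (par _ _ (k1 / rh)); [nzt | nzt | rewrite EDs; vec].
  + split.
    * apply: (par _ _ (k1 * (r - 1) / (r * (rh - 1)))); [nzt | | rewrite ECs EBs EC ED; vec].
        by nzt.
    * apply: (par _ _ (k1 * (rh - 1) / (rh * (r - 1)))); [nzt | | rewrite EDs EBs EC ED; vec].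
      by nzt.
Qed.

Lemma local_closed (A B C D M : pt) (k1 r rh : R) : r != 0 -> rh != 0 ->
  C = M + r *: (A - M) -> D = M + rh *: (B - M) ->
  k1 *: (B - A) + (k1 / r) *: (C - B) = (k1 / rh) *: (D - A) + (k1 / (r * rh)) *: (C - D).
Proof. by move=> hr hh EC ED; rewrite EC ED; vec. Qed.

Lemma local_k (A B C D M As Bs Cs Ds : pt) (r rh k1 k2 k3 k4 mu eta : R) :
  indep (A - M) (B - M) -> C = M + r *: (A - M) -> D = M + rh *: (B - M) ->
  Bs - As = k1 *: (B - A) -> Cs - Bs = k2 *: (C - B) -> Cs - Ds = k3 *: (C - D) ->
  Ds - As = k4 *: (D - A) -> Cs - As = mu *: (D - B) -> Ds - Bs = eta *: (C - A) ->
  [/\ k1 = k2 * r, k4 = k3 * r & k1 = k4 * rh].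
Proof.
move=> hi EC ED E1 E2 E3 E4 E5 E6.
have H1 : (k2 * r - k1) *: (A - M) + (k1 - k2 - mu * (rh - 1)) *: (B - M) = 0.
  have -> : (k2 * r - k1) *: (A - M) + (k1 - k2 - mu * (rh - 1)) *: (B - M) =
    k2 *: (C - B) + k1 *: (B - A) - mu *: (D - B) by rewrite EC ED; vec.
  by rewrite -E1 -E2 -E5; vec.
have H2 : (k3 * r - k4) *: (A - M) + (- (k3 * rh) + k4 * rh - mu * (rh - 1)) *: (B - M) = 0.
  have -> : (k3 * r - k4) *: (A - M) + (- (k3 * rh) + k4 * rh - mu * (rh - 1)) *: (B - M) =
    k3 *: (C - D) + k4 *: (D - A) - mu *: (D - B) by rewrite EC ED; vec.
  by rewrite -E3 -E4 -E5; vec.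
have H3 : (- k4 + k1 - eta * (r - 1)) *: (A - M) + (k4 * rh - k1) *: (B - M) = 0.
  have -> : (- k4 + k1 - eta * (r - 1)) *: (A - M) + (k4 * rh - k1) *: (B - M) =
    k4 *: (D - A) - k1 *: (B - A) - eta *: (C - A) by rewrite EC ED; vec.
  by rewrite -E1 -E4 -E6; vec.
have [h1 _] := hi _ _ H1; have [h2 _] := hi _ _ H2; have [_ h3] := hi _ _ H3.
split; apply/esym/eqP; by rewrite -subr_eq0; apply/eqP.
Qed.

Lemma ratio_eq (X Y M : pt) (c : R) : X - M = c *: (Y - M) -> X = M + c *: (Y - M).
Proof. by move=> <-; rewrite addrC subrK. Qed.

Lemma scal_cancel (a : pt) (c1 c2 : R) : a != 0 -> c1 *: a = c2 *: a -> c1 = c2.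
Proof.
move=> ha E; apply/eqP; rewrite -subr_eq0.
have : (c1 - c2) *: a == 0 by rewrite scalerBl E subrr.
by rewrite scaler_eq0 (negPf ha) orbF.
Qed.

Section Main.
Variable m : nat.
Hypothesis Hm : (2 <= m)%N.
Variable f : 'rV[int]_m -> pt.
Hypothesis Hf : Qnet f.

Lemma other (i : 'I_m) : exists j : 'I_m, j != i.
Proof.
have h0 : (0 < m)%N by apply: leq_trans Hm.
have h1 : (1 < m)%N by [].
case: (eqVneq (Ordinal h0) i) => E.
  by exists (Ordinal h1); rewrite -E -val_eqE.
by exists (Ordinal h0).
Qed.

Lemma quadf u (i j : 'I_m) : i != j ->
  exists M, [/\ on_line M (f u) (f (u + ev i + ev j)), on_line M (f (u + ev i)) (f (u + ev j)),
     indep (f u - M) (f (u + ev i) - M) &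
     (forall M', on_line M' (f u) (f (u + ev i + ev j)) -> on_line M' (f (u + ev i)) (f (u + ev j)) -> M' = M)]
  /\ [/\ f u != f (u + ev i), f (u + ev i) != f (u + ev i + ev j), f (u + ev i + ev j) != f (u + ev j),
         f (u + ev j) != f u & f u != f (u + ev i + ev j) /\ f (u + ev i) != f (u + ev j)].
Proof.
move=> hij; have [_ hq] := Hf u hij.
have hq' := hq; move: hq' => [[hAB hAC hAD [hBC hBD hCD]] _ _].
have [M [r [rh [[h1 h2 _ _ [hi _ _ _ _]] hu]]]] := quad_info hq.
exists M; split; first by split.
by split => //; rewrite eq_sym.
Qed.


Lemma nu_loc nu : nu_cond f nu -> forall u (i j : 'I_m), i != j -> exists M,
   [/\ indep (f u - M) (f (u + ev i) - M),
       f (u + ev i + ev j) = M + (nu (u + ev i + ev j) / nu u) *: (f u - M),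
       f (u + ev j) = M + (nu (u + ev j) / nu (u + ev i)) *: (f (u + ev i) - M),
       nu (u + ev i + ev j) / nu u != 1 & nu (u + ev j) / nu (u + ev i) != 1].
Proof.
move=> [hnz Hnu] u i j hij.
have [M [[hl1 hl2 hi _] [hAB hBC hCD hDA [hAC hBD]]]] := quadf u hij.
have [L1 L2] := Hnu u i j hij M hl1 hl2.
have E1 := ratio_eq L1; have E2 := ratio_eq L2.
exists M; split => //.
- by apply/eqP => E; move: hAC; rewrite E1 E scale1r addrCA subrr addr0 eqxx.
- by apply/eqP => E; move: hBD; rewrite E2 E scale1r addrCA subrr addr0 eqxx.
Qed.

Lemma nu_to_K nu : nu_cond f nu -> Koenigs f.
Proof.
move=> Hn; have [hnz _] := Hn.
pose w u i := (nu u * nu (u + ev i))^-1 *: (f (u + ev i) - f u).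
have Hw : forall u i j, w u i + w (u + ev i) j = w u j + w (u + ev j) i.
  move=> u i j; case: (eqVneq i j) => [->//|hij].
  have [M [hi E1 E2 _ _]] := nu_loc Hn u hij.
  rewrite /w (addrAC u (ev j)).
  have n0 := hnz u; have n1 := hnz (u + ev i); have n2 := hnz (u + ev i + ev j); have n3 := hnz (u + ev j).
  have -> : (nu (u + ev i) * nu (u + ev i + ev j))^-1 =
    (nu u * nu (u + ev i))^-1 / (nu (u + ev i + ev j) / nu u) by fld.
  have -> : (nu u * nu (u + ev j))^-1 =
    (nu u * nu (u + ev i))^-1 / (nu (u + ev j) / nu (u + ev i)) by fld.
  have -> : (nu (u + ev j) * nu (u + ev i + ev j))^-1 =
    (nu u * nu (u + ev i))^-1 / ((nu (u + ev i + ev j) / nu u) * (nu (u + ev j) / nu (u + ev i))) by fld.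
  apply: local_closed E1 E2; by rewrite mulf_neq0 ?invr_neq0.
have [F HF] := integrate_ex Hw.
have loc : forall u (i j : 'I_m), i != j ->
  [/\ planar4 (F u) (F (u + ev i)) (F (u + ev i + ev j)) (F (u + ev j)),
      nondeg_quad (F u) (F (u + ev i)) (F (u + ev i + ev j)) (F (u + ev j)) &
      dual_quad (f u) (f (u + ev i)) (f (u + ev i + ev j)) (f (u + ev j))
                (F u) (F (u + ev i)) (F (u + ev i + ev j)) (F (u + ev j))].
  move=> u i j hij.
  have [M [hi E1 E2 hr1 hh1]] := nu_loc Hn u hij.
  have [_ [_ [hAB hBC hCD hDA [hAC hBD]]]] := quadf u hij.
  have n0 := hnz u; have n1 := hnz (u + ev i); have n2 := hnz (u + ev i + ev j); have n3 := hnz (u + ev j).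
  apply: (local_dual (k1 := (nu u * nu (u + ev i))^-1) (As := F u) (Bs := F (u + ev i)) (Cs := F (u + ev i + ev j)) (Ds := F (u + ev j)) hi _ _ hr1 _ hh1 hAB hBC hCD hDA hAC hBD E1 E2).
  - by rewrite invr_neq0 ?mulf_neq0.
  - by rewrite mulf_neq0 ?invr_neq0.
  - by rewrite mulf_neq0 ?invr_neq0.
  - by rewrite (HF u i).
  - rewrite (HF (u + ev i) j) /w.
    congr (_ + _ *: _); fld.
  - rewrite (HF u j) /w.
    congr (_ + _ *: _); fld.
  - rewrite -(addrAC u (ev j)) (HF (u + ev j) i) /w (addrAC u (ev j)).
    congr (_ + _ *: _); fld.
exists F; split.
  by move=> u i j hij; have [h1 h2 _] := loc u i j hij; split.
by move=> u i j hij; have [_ _ h3] := loc u i j hij.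
Qed.

Lemma K_to_nu : Koenigs f -> exists nu, nu_cond f nu.
Proof.
move=> [fs [Hfs Hd]].
pose k u i := epsilon (inhabits (0:R))
  (fun c : R => fs (u + ev i) - fs u = c *: (f (u + ev i) - f u)).
have hk : forall u i, fs (u + ev i) - fs u = k u i *: (f (u + ev i) - f u).
  move=> u i; apply: (epsilon_spec (inhabits (0:R))
    (fun c : R => fs (u + ev i) - fs u = c *: (f (u + ev i) - f u))).
  have [j hj] := other i.
  have hij : i != j by rewrite eq_sym.
  have [[_ [_ [c Ec]]] _ _ _ _] := Hd u i j hij.
  by exists c.
have hk0 : forall u i, k u i != 0.
  move=> u i; apply/eqP => E.
  have [j hj] := other i.
  have hij : i != j by rewrite eq_sym.
  have [_ [[hAB _ _ _] _ _]] := Hfs u i j hij.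
  by move: (hk u i); rewrite E scale0r => /eqP; rewrite subr_eq0 eq_sym (negPf hAB).
have rel : forall u (i j : 'I_m), i != j -> exists M r rh,
   [/\ on_line M (f u) (f (u + ev i + ev j)), on_line M (f (u + ev i)) (f (u + ev j)),
       f (u + ev i + ev j) = M + r *: (f u - M), f (u + ev j) = M + rh *: (f (u + ev i) - M) &
       (forall M', on_line M' (f u) (f (u + ev i + ev j)) -> on_line M' (f (u + ev i)) (f (u + ev j)) -> M' = M)]
   /\ [/\ k u i = k (u + ev i) j * r, k u j = k (u + ev j) i * r & k u i = k u j * rh].
  move=> u i j hij.
  have [_ hq] := Hf u hij.
  have [M [r [rh [[h1 h2 EC ED [hi _ _ _ _]] hu]]]] := quad_info hq.
  exists M, r, rh; split; first by split.
  have [_ _ _ _ [[_ [_ [mu Emu]]] [_ [_ [eta Eeta]]]]] := Hd u i j hij.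
  have E3 := hk (u + ev j) i; rewrite (addrAC u (ev j)) in E3.
  exact: (local_k hi EC ED (hk u i) (hk (u + ev i) j) E3 (hk u j) Emu Eeta).
pose kz u i : nzR R := exist _ (k u i) (hk0 u i).
pose om u i : nzR R := if black u then kz u i else - kz u i.
have Hom : forall u i j, om u i + om (u + ev i) j = om u j + om (u + ev j) i.
  move=> u i j; case: (eqVneq i j) => [->//|hij].
  have [M [r [rh [_ [h1 h2 h3]]]]] := rel u i j hij.
  have k1 := hk0 u i; have k2 := hk0 (u + ev i) j; have k3 := hk0 (u + ev j) i; have k4 := hk0 u j.
  have hr : r != 0 by apply/eqP => r0; move: k1; rewrite h1 r0 mulr0 eqxx.
  apply: val_inj; rewrite /om -!shiftE !black_shift.
  case: (black u) => /=; rewrite !shiftE h1 h2; fld.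
have [psi Hpsi] := integrate_ex Hom.
pose nu u := if black u then sval (psi u) else (sval (psi u))^-1.
have hnu0 : forall u, nu u != 0.
  by move=> u; have p0 := svalP (psi u); rewrite /nu; case: (black u); rewrite ?invr_neq0.
have key : forall u i, nu u * nu (u + ev i) = (k u i)^-1.
  move=> u i; have p0 := svalP (psi u); have k0 := hk0 u i.
  rewrite /nu -shiftE black_shift (Hpsi u i) /om.
  case: (black u) => /=; fld.
exists nu; split => // u i j hij M hl1 hl2.
have [M0 [r [rh [[_ _ EC ED hu] [h1 h2 h3]]]]] := rel u i j hij.
have EM : M = M0 := hu M hl1 hl2.
rewrite /lratio_is !shiftE EM EC ED.
have k1 := hk0 u i; have k2 := hk0 (u + ev i) j; have k4 := hk0 u j.
have na := hnu0 u; have nb := hnu0 (u + ev i); have nc := hnu0 (u + ev i + ev j); have nd := hnu0 (u + ev j).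
have hr : r != 0 by apply/eqP => r0; move: k1; rewrite h1 r0 mulr0 eqxx.
have hh : rh != 0 by apply/eqP => r0; move: k1; rewrite h3 r0 mulr0 eqxx.
have -> : nu (u + ev i + ev j) / nu u = r.
  have -> : nu (u + ev i + ev j) / nu u =
     (nu (u + ev i) * nu (u + ev i + ev j)) / (nu u * nu (u + ev i)) by fld.
  rewrite key key h1; fld.
have -> : nu (u + ev j) / nu (u + ev i) = rh.
  have -> : nu (u + ev j) / nu (u + ev i) = (nu u * nu (u + ev j)) / (nu u * nu (u + ev i)) by fld.
  rewrite key key h3; fld.
by split; vec.
Qed.
Lemma par_lemma (T : Type) (g : 'rV[int]_m -> T) :
  (forall u (i j : 'I_m), i != j -> g (u + ev j) = g (u + ev i)) ->
  (forall u (i j : 'I_m), i != j -> g (u + ev i + ev j) = g u) ->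
  exists w0, forall u, g u = if black u then g 0 else g w0.
Proof.
move=> H1 H2.
have h0 : (0 < m)%N by apply: leq_trans Hm.
pose i0 := Ordinal h0.
pose phi u := g (u + ev i0).
have s1 : forall u i, g (u + ev i) = phi u.
  move=> u i; case: (eqVneq i i0) => [->//|h].
  by rewrite /phi (H1 u i0 i) // eq_sym.
have s2 : forall u i, phi (u + ev i) = g u.
  move=> u i; rewrite /phi; case: (eqVneq i i0) => [->|h]; last exact: H2.
  have [j hj] := other i0.
  by rewrite (H1 (u + ev i0) j i0) // H2 // eq_sym.
exists (0 + ev i0).
suff H : forall u, g u = (if black u then g 0 else phi 0) /\ phi u = (if black u then phi 0 else g 0).
  by move=> u; have [-> _] := H u.
have b0 : black (0 : 'rV[int]_m).
  by rewrite /black big1 ?dvdz0 // => k _; rewrite mxE.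
apply: Zm_ind.
  by rewrite b0.
move=> u i; rewrite black_shift shiftE s1 s2.
by case: (black u) => /=; split => -[-> ->].
Qed.

Lemma ratio_c (c x y : R) : c != 0 -> y != 0 -> c * x / (c * y) = x / y.
Proof. move=> hc hy; fld. Qed.

Lemma uniq_nu nu nu' : nu_cond f nu -> (nu_cond f nu' <->
  exists cb cw : R, [/\ cb != 0, cw != 0 & forall u, nu' u = (if black u then cb else cw) * nu u]).
Proof.
move=> [hnz Hnu]; split.
  move=> [hnz' Hnu'].
  pose c u := nu' u / nu u.
  have hq : forall u (i j : 'I_m), i != j -> c (u + ev i + ev j) = c u /\ c (u + ev j) = c (u + ev i).
    move=> u i j hij.
    have [_ hq] := Hf u hij.
    have [M [r [rh [[h1 h2 _ _ [_ _ _ hAM hBM]] _]]]] := quad_info hq.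
    have [L1 L2] := Hnu u i j hij M h1 h2.
    have [L1' L2'] := Hnu' u i j hij M h1 h2.
    have e1 := scal_cancel (a := f u - M) _ (etrans (esym L1) L1').
    have e2 := scal_cancel (a := f (shift u i) - M) _ (etrans (esym L2) L2').
    rewrite !subr_eq0 in e1 e2.
    have e1' := e1 hAM; have e2' := e2 hBM.
    rewrite !shiftE in e1' e2'.
    have na := hnz u; have nb := hnz (u + ev i); have nc := hnz (u + ev i + ev j); have nd := hnz (u + ev j).
    have na' := hnz' u; have nb' := hnz' (u + ev i).
    rewrite /c; split.
      have -> : nu' (u + ev i + ev j) / nu (u + ev i + ev j) =
        (nu' (u + ev i + ev j) / nu' u) * nu' u / (nu (u + ev i + ev j) / nu u) / nu u by fld.
      by rewrite -e1'; fld.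
    have -> : nu' (u + ev j) / nu (u + ev j) =
      (nu' (u + ev j) / nu' (u + ev i)) * nu' (u + ev i) / (nu (u + ev j) / nu (u + ev i)) / nu (u + ev i) by fld.
    by rewrite -e2'; fld.
  have [w0 Hw0] := par_lemma (g := c) (fun u i j h => (hq u i j h).2) (fun u i j h => (hq u i j h).1).
  exists (c 0), (c w0); split.
  - by rewrite /c mulf_neq0 ?invr_neq0.
  - by rewrite /c mulf_neq0 ?invr_neq0.
  - move=> u; rewrite -(fun_if (fun x => x)) -Hw0 /c; have := hnz u; move=> hn; fld.
move=> [cb [cw [hb hw Hc]]]; split.
  by move=> u; rewrite Hc mulf_neq0 //; case: (black u).
move=> u i j hij M h1 h2; have [L1 L2] := Hnu u i j hij M h1 h2.
rewrite !Hc !black_shift negbK.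
have na := hnz u; have nb := hnz (shift u i).
by case: (black u) => /=; rewrite !ratio_c.
Qed.
End Main.
End Geo.

Unset Implicit Arguments.

Theorem mainTheorem7 (R : realFieldType) (N m : nat) (HN : (3 <= N)%N) (Hm : (2 <= m)%N)
  (f : 'rV[int]_m -> 'rV[R]_N) (Hf : Qnet f) :
  (Koenigs f <-> exists nu : 'rV[int]_m -> R, nu_cond f nu) /\
  (forall nu : 'rV[int]_m -> R, nu_cond f nu ->
     forall nu' : 'rV[int]_m -> R,
       nu_cond f nu' <->
       exists cb cw : R, [/\ cb != 0, cw != 0 &
         forall u, nu' u = (if black u then cb else cw) * nu u]).
Proof.
split.
  split; first exact: (K_to_nu Hm Hf).
  by case=> nu Hn; exact: (nu_to_K Hf Hn).
by move=> nu Hn nu'; exact: (uniq_nu Hm Hf nu' Hn).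
Qed.
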